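(* Let $D\ge 2$, let $W_1,\dots,W_D$ be mutually independent discrete random variables with finite entropy, and let $S$ be a discrete random variable (jointly distributed with $W_1,\dots,W_D$) with $H(S)<\infty$. Then $$\sum_{\substack{d_1,d_2\in[1:D]\\ d_1\neq d_2}} I\big(W_{d_1},W_{d_2};S\big)\ \le\ (2D-1)\,H(S),$$ where the sum runs over ordered pairs $(d_1,d_2)$.
   Context: $I(\cdot;\cdot)$ denotes mutual information and $H(\cdot)$ Shannon entropy; $[1:D]=\{1,\dots,D\}$. *)

(* Defs.v *)
From Stdlib Require Import Reals Lra Lia Classical ClassicalEpsilon.
Open Scope R_scope.

(* Discrete probability space: sample space nat with a pmf p.
   (The joint law of countably many discrete random variables is a
   distribution on a countable set, so this loses no generality.) *)
Definition is_pmf (p : nat -> R) : Prop :=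
  (forall w, 0 <= p w) /\ infinite_sum p 1.

(* Value of a convergent series (0 if it does not converge). *)
Definition sum_of (f : nat -> R) : R :=
  match excluded_middle_informative (exists l, infinite_sum f l) with
  | left H => proj1_sig (constructive_indefinite_description _ H)
  | right _ => 0
  end.

Definition Pr (p : nat -> R) (E : nat -> Prop) : R :=
  sum_of (fun w => if excluded_middle_informative (E w) then p w else 0).

(* Summand of the Shannon entropy H(X) = E[- ln P(X = X)] = sum_w p(w) (- ln p_X(X w)). *)
Definition ent_term {A : Type} (p : nat -> R) (X : nat -> A) (w : nat) : R :=
  p w * - ln (Pr p (fun w' => X w' = X w)).

Definition finite_entropy {A : Type} (p : nat -> R) (X : nat -> A) : Prop :=
  exists l, infinite_sum (ent_term p X) l.

Definition Ent {A : Type} (p : nat -> R) (X : nat -> A) : R :=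
  sum_of (ent_term p X).

(* Mutual information I(X;Y) = H(X) + H(Y) - H(X,Y) (all finite where used). *)
Definition MI {A B : Type} (p : nat -> R) (X : nat -> A) (Y : nat -> B) : R :=
  Ent p X + Ent p Y - Ent p (fun w => (X w, Y w)).

(* rsum n f = f 1 + ... + f n *)
Fixpoint rsum (n : nat) (f : nat -> R) : R :=
  match n with O => 0 | S m => rsum m f + f n end.
Fixpoint rprod (n : nat) (f : nat -> R) : R :=
  match n with O => 1 | S m => rprod m f * f n end.

Definition mutually_independent (p : nat -> R) (D : nat) (W : nat -> nat -> nat) : Prop :=
  forall x : nat -> nat,
    Pr p (fun w => forall d, (1 <= d <= D)%nat -> W d w = x d)
    = rprod D (fun d => Pr p (fun w => W d w = x d)).

(* Main.v *)
Require Import Defs.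
From Stdlib Require Import Reals Lra Lia Classical ClassicalEpsilon FunctionalExtensionality PropExtensionality List.
Open Scope R_scope.

Lemma sum_of_eq f l : infinite_sum f l -> sum_of f = l.
Proof.
  intros H. unfold sum_of. destruct excluded_middle_informative as [e|n].
  - destruct (constructive_indefinite_description _ e) as [l' Hl']. simpl.
    eapply uniqueness_sum; eauto.
  - exfalso; apply n; eauto.
Qed.

Definition ind (p : nat -> R) (E : nat -> Prop) (w : nat) : R :=
  if excluded_middle_informative (E w) then p w else 0.

Lemma ind_bounds p E w : is_pmf p -> 0 <= ind p E w <= p w.
Proof. intros [H _]. unfold ind; destruct excluded_middle_informative; specialize (H w); lra. Qed.

Lemma Pr_sum p E : is_pmf p -> infinite_sum (ind p E) (Pr p E).
Proof.
  intros hp. assert (Hex : exists l, infinite_sum (ind p E) l).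
  { destruct (Rseries_CV_comp (ind p E) p) as [l Hl].
    - intros n; apply ind_bounds; auto.
    - exists 1. apply hp.
    - exists l; exact Hl. }
  destruct Hex as [l Hl]. unfold Pr. fold (ind p E). rewrite (sum_of_eq _ _ Hl). exact Hl.
Qed.

Lemma sum_nonneg f n : (forall k, 0 <= f k) -> 0 <= sum_f_R0 f n.
Proof. intros H; induction n; simpl; auto. specialize (H (S n)); lra. Qed.

Lemma sum_le f g n : (forall k, f k <= g k) -> sum_f_R0 f n <= sum_f_R0 g n.
Proof. intros H; induction n; simpl; auto. specialize (H (S n)); lra. Qed.

Lemma partial_le_lim f l n : (forall k, 0 <= f k) -> infinite_sum f l -> sum_f_R0 f n <= l.
Proof. intros H1 H2. apply sum_incr; auto. Qed.

Lemma lim_nonneg f l : (forall k, 0 <= f k) -> infinite_sum f l -> 0 <= l.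
Proof. intros H1 H2. eapply Rle_trans. 2: apply (partial_le_lim f l 0); auto. simpl; auto. Qed.

Lemma lim_le f g l1 l2 : (forall k, f k <= g k) -> infinite_sum f l1 -> infinite_sum g l2 -> l1 <= l2.
Proof. intros H H1 H2. apply (@Rle_cv_lim (fun n => sum_f_R0 f n) (fun n => sum_f_R0 g n) l1 l2); auto.
  intros; apply sum_le; auto. Qed.

Lemma isum_plus f g l1 l2 : infinite_sum f l1 -> infinite_sum g l2 -> infinite_sum (fun k => f k + g k) (l1 + l2).
Proof. intros H1 H2. intros e He. destruct (CV_plus _ _ _ _ H1 H2 e He) as [N HN].
  exists N; intros n Hn. rewrite sum_plus. apply HN; auto. Qed.

Lemma isum_ext f g l : (forall k, f k = g k) -> infinite_sum f l -> infinite_sum g l.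
Proof. intros H. replace g with f; auto. apply functional_extensionality; auto. Qed.

Lemma isum_scal c f l : infinite_sum f l -> infinite_sum (fun k => c * f k) (c * l).
Proof. intros H e He. assert (Hc : Un_cv (fun _ : nat => c) c).
  { intros e' He'; exists 0%nat; intros; unfold R_dist; rewrite Rminus_diag, Rabs_R0; auto. }
  destruct (CV_mult _ _ _ _ Hc H e He) as [N HN]. exists N; intros n Hn.
  replace (sum_f_R0 (fun k => c * f k) n) with (c * sum_f_R0 f n). apply HN; auto.
  rewrite scal_sum. apply sum_eq; intros; ring. Qed.

Lemma Pr_nonneg p E : is_pmf p -> 0 <= Pr p E.
Proof. intros hp. eapply lim_nonneg. 2: apply Pr_sum; auto. intros; apply ind_bounds; auto. Qed.

Lemma Pr_mono p E F : is_pmf p -> (forall w, E w -> F w) -> Pr p E <= Pr p F.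
Proof. intros hp H. eapply lim_le. 3: apply Pr_sum; auto. 2: apply Pr_sum; auto.
  intros k. unfold ind. destruct hp as [hp _]. specialize (hp k).
  repeat destruct excluded_middle_informative; try lra. exfalso; auto. Qed.

Lemma Pr_le1 p E : is_pmf p -> Pr p E <= 1.
Proof. intros hp. eapply lim_le. 3: apply hp. 2: apply Pr_sum; auto. intros; apply ind_bounds; auto. Qed.

Lemma Pr_ext p E F : (forall w, E w <-> F w) -> Pr p E = Pr p F.
Proof. intros H. replace F with E; auto. apply functional_extensionality; intros w.
  apply propositional_extensionality; auto. Qed.

Lemma Pr_split p E G : is_pmf p -> Pr p E = Pr p (fun w => E w /\ G w) + Pr p (fun w => E w /\ ~ G w).
Proof. intros hp. eapply uniqueness_sum. apply Pr_sum; auto.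
  eapply isum_ext. 2: apply isum_plus; apply Pr_sum; auto.
  intros k; unfold ind. repeat destruct excluded_middle_informative; try lra; tauto. Qed.

Lemma sum_single p w n : (w <= n)%nat ->
  sum_f_R0 (ind p (fun w' => w' = w)) n = p w.
Proof. intros H. induction n.
  - assert (w = 0%nat) by lia; subst. simpl. unfold ind. destruct excluded_middle_informative; tauto.
  - destruct (Nat.eq_dec w (S n)) as [e|ne].
    + subst. simpl. rewrite (sum_eq _ (fun _ => 0)).
      * rewrite sum_cte. unfold ind. destruct excluded_middle_informative; [|tauto]. lra.
      * intros i Hi. unfold ind. destruct excluded_middle_informative; auto; lia.
    + simpl. rewrite IHn by lia. unfold ind. destruct excluded_middle_informative; [lia|lra].
Qed.

Lemma Pr_single p w : is_pmf p -> Pr p (fun w' => w' = w) = p w.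
Proof. intros hp. eapply uniqueness_sum. apply Pr_sum; auto.
  intros e He. exists w. intros n Hn. rewrite sum_single by lia. unfold R_dist.
  rewrite Rminus_diag, Rabs_R0; auto. Qed.

Lemma Pr_ge_p p E w : is_pmf p -> E w -> p w <= Pr p E.
Proof. intros hp H. rewrite <- Pr_single; auto. apply Pr_mono; auto. intros; subst; auto. Qed.

Definition lsum (f : nat -> R) (L : list nat) : R := fold_right (fun w acc => f w + acc) 0 L.

Lemma lsum_app f L1 L2 : lsum f (L1 ++ L2) = lsum f L1 + lsum f L2.
Proof. induction L1; simpl; [lra|]. rewrite IHL1; lra. Qed.

Lemma lsum_seq f N : lsum f (seq 0 (S N)) = sum_f_R0 f N.
Proof. induction N. simpl; lra. rewrite seq_S, lsum_app, IHN. simpl. lra. Qed.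

Lemma lsum_ext_in f g L : (forall w, In w L -> f w = g w) -> lsum f L = lsum g L.
Proof. induction L; simpl; auto. intros H. rewrite H, IHL; auto. Qed.

Lemma lsum_le_in f g L : (forall w, In w L -> f w <= g w) -> lsum f L <= lsum g L.
Proof. induction L; simpl. lra. intros H. specialize (IHL (fun w h => H w (or_intror h))).
  specialize (H a (or_introl eq_refl)). lra. Qed.

Lemma lsum_nonneg f L : (forall w, In w L -> 0 <= f w) -> 0 <= lsum f L.
Proof. intros H. replace 0 with (lsum (fun _ => 0) L). apply lsum_le_in; auto.
  induction L; simpl; auto. rewrite IHL; auto with real. intros; apply H; simpl; auto. Qed.

Lemma lsum_scal c f L : lsum (fun w => c * f w) L = c * lsum f L.
Proof. induction L; simpl. ring. rewrite IHL; ring. Qed.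

Lemma lsum_filter_split f a L : lsum f L = lsum f (filter a L) + lsum f (filter (fun x => negb (a x)) L).
Proof. induction L; simpl. lra. destruct (a a0); simpl; rewrite IHL; lra. Qed.

Lemma filter_filter_sub (a b : nat -> bool) L : (forall x, a x = true -> b x = true) ->
  filter a (filter b L) = filter a L.
Proof. intros H; induction L; simpl; auto. destruct (b a0) eqn:E; simpl.
  - rewrite IHL; auto.
  - destruct (a a0) eqn:E2; auto. rewrite H in E; auto; discriminate. Qed.

Definition cls {A : Type} (K : nat -> A) (w0 w : nat) : bool :=
  if excluded_middle_informative (K w = K w0) then true else false.

Lemma cls_true {A} (K : nat -> A) w0 w : cls K w0 w = true <-> K w = K w0.
Proof. unfold cls; destruct excluded_middle_informative; split; auto; discriminate. Qed.

Lemma group {A : Type} (K : nat -> A) (f c : nat -> R) : forall (L : list nat) (M : R),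
  (forall w0, In w0 L -> lsum f (filter (cls K w0) L) <= c w0) ->
  (forall R, incl R L -> NoDup (map K R) -> lsum c R <= M) ->
  lsum f L <= M.
Proof.
  intros L. remember (length L) as n eqn:Hn. revert L Hn.
  induction n as [n IH] using (well_founded_induction Wf_nat.lt_wf). intros L Hn M H1 H2.
  destruct L as [|w0 L0].
  - simpl. specialize (H2 nil). simpl in H2. apply H2. intros x h; inversion h. constructor.
  - set (L := w0 :: L0) in *.
    rewrite (lsum_filter_split f (cls K w0) L).
    set (L' := filter (fun x => negb (cls K w0 x)) L).
    assert (HL' : forall x, In x L' <-> In x L /\ K x <> K w0).
    { intros x. unfold L'. rewrite filter_In. rewrite <- cls_true.
      destruct (cls K w0 x); simpl; intuition discriminate. }
    assert (Hlen : (length L' < n)%nat).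
    { subst n. unfold L', L. simpl. assert (cls K w0 w0 = true) as ->; [apply cls_true; auto|]. simpl.
      apply Nat.lt_succ_r. apply filter_length_le. }
    assert (Hc := H1 w0 (or_introl eq_refl)).
    assert (IH' : lsum f L' <= M - c w0).
    { apply (IH (length L') Hlen L' eq_refl).
      - intros w1 Hw1. apply HL' in Hw1 as [Hw1 Hk].
        unfold L'. rewrite filter_filter_sub. apply H1; auto.
        intros x Hx. apply cls_true in Hx. apply Bool.negb_true_iff.
        destruct (cls K w0 x) eqn:E; auto. apply cls_true in E. congruence.
      - intros R HR HN. assert (H := H2 (w0 :: R)). simpl in H.
        assert (lsum c R + c w0 <= M); [|lra]. rewrite Rplus_comm. apply H.
        + intros x [h|h]; [subst; simpl; auto|]. apply HL'; auto.
        + constructor; auto. intros Hin. apply in_map_iff in Hin as [x [Hx Hx']].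
          apply HR, HL' in Hx'. destruct Hx'; congruence. }
    lra.
Qed.

Lemma disj_sum {A : Type} p (K : nat -> A) : is_pmf p -> forall (R : list nat) (F : nat -> Prop),
  NoDup (map K R) ->
  lsum (fun w => Pr p (fun w' => F w' /\ K w' = K w)) R <= Pr p F.
Proof.
  intros hp R. induction R as [|w R IH]; intros F HN; simpl.
  - apply Pr_nonneg; auto.
  - simpl in HN. inversion HN as [|? ? Hnot HN']. subst.
    rewrite (Pr_split p F (fun w' => K w' = K w)); auto.
    assert (lsum (fun w0 => Pr p (fun w' => F w' /\ K w' = K w0)) R
            = lsum (fun w0 => Pr p (fun w' => (F w' /\ ~ K w' = K w) /\ K w' = K w0)) R).
    { apply lsum_ext_in. intros x Hx. apply Pr_ext. intros y. split; [|tauto].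
      intros [h1 h2]. repeat split; auto. intros h3. apply Hnot. rewrite <- h3, h2.
      apply in_map; auto. }
    rewrite H. specialize (IH (fun w' => F w' /\ ~ K w' = K w) HN'). lra.
Qed.

Lemma nodup_sum p (E : nat -> Prop) R : is_pmf p -> NoDup R -> (forall w, In w R -> E w) ->
  lsum p R <= Pr p E.
Proof.
  intros hp HN HE. eapply Rle_trans. 2: apply (disj_sum p (fun w => w) hp R E); rewrite map_id; auto.
  right. apply lsum_ext_in. intros w Hw. rewrite <- (Pr_single p w) at 1; auto. apply Pr_ext.
  intros y; split; [intros ->; auto|tauto].
Qed.

Lemma nodup_map_filter {T} (K : nat -> T) a L : NoDup (map K L) -> NoDup (map K (filter a L)).
Proof. induction L; simpl; auto. intros H; inversion H; subst. destruct (a a0); simpl; auto.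
  constructor; auto. intros Hin. apply in_map_iff in Hin as [x [Hx Hx']]. apply filter_In in Hx' as [Hx' _].
  apply H2. rewrite <- Hx. apply in_map; auto. Qed.

Lemma nodup_map_coarser {T U} (f : nat -> T) (g : nat -> U) L : NoDup (map f L) ->
  (forall x y, In x L -> In y L -> g x = g y -> f x = f y) -> NoDup (map g L).
Proof. induction L; simpl; intros H Hfg; constructor; inversion H; subst.
  - intros Hin. apply in_map_iff in Hin as [x [Hx Hx']]. apply H2. rewrite <- (Hfg x a); auto. apply in_map; auto.
  - apply IHL; auto. Qed.

Section Key.
Variable p : nat -> R.
Hypothesis hp : is_pmf p.
Variables (A B C : Type) (X : nat -> A) (Y : nat -> B) (Z : nat -> C).

Definition PXYZ w := Pr p (fun w' => X w' = X w /\ Y w' = Y w /\ Z w' = Z w).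
Definition PXZ w := Pr p (fun w' => X w' = X w /\ Z w' = Z w).
Definition PYZ w := Pr p (fun w' => Y w' = Y w /\ Z w' = Z w).
Definition PZ w := Pr p (fun w' => Z w' = Z w).
Definition gg w := PXZ w * PYZ w / PZ w.
Definition tterm w := p w * (gg w / PXYZ w).

Lemma gg_nonneg w : 0 <= gg w.
Proof. unfold gg, PXZ, PYZ, PZ. assert (h1 := Pr_nonneg p (fun w' => X w' = X w /\ Z w' = Z w) hp).
  assert (h2 := Pr_nonneg p (fun w' => Y w' = Y w /\ Z w' = Z w) hp).
  assert (h3 := Pr_nonneg p (fun w' => Z w' = Z w) hp).
  unfold Rdiv. apply Rmult_le_pos. apply Rmult_le_pos; auto.
  destruct h3 as [h3| <-]. left; apply Rinv_0_lt_compat; auto. rewrite Rinv_0; lra. Qed.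

Lemma div_bound (s g a : R) : 0 <= g -> 0 <= a -> s <= a -> 0 <= s -> g / a * s <= g.
Proof. intros hg ha hs hs0. destruct ha as [ha| <-].
  - unfold Rdiv. rewrite Rmult_assoc. rewrite <- (Rmult_1_r g) at 2. apply Rmult_le_compat_l; auto.
    apply (Rmult_le_reg_l a); auto. field_simplify; lra.
  - unfold Rdiv. rewrite Rinv_0. lra. Qed.

Lemma key_bound N : sum_f_R0 tterm N <= 1.
Proof.
  rewrite <- lsum_seq. set (L := seq 0 (S N)).
  assert (HL : NoDup L) by apply seq_NoDup.
  apply (group (fun w => (X w, Y w, Z w)) tterm gg L 1).
  - intros w0 Hw0. set (F := filter _ L).
    assert (HF : forall w, In w F -> X w = X w0 /\ Y w = Y w0 /\ Z w = Z w0).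
    { intros w Hw. apply filter_In in Hw as [_ Hw]. apply cls_true in Hw. inversion Hw; auto. }
    rewrite (lsum_ext_in _ (fun w => gg w0 / PXYZ w0 * p w)).
    + rewrite lsum_scal. apply div_bound. apply gg_nonneg. apply Pr_nonneg; auto.
      apply nodup_sum; auto. apply NoDup_filter; auto.
      apply lsum_nonneg. intros; apply hp.
    + intros w Hw. destruct (HF w Hw) as [h1 [h2 h3]]. unfold tterm, gg, PXYZ, PXZ, PYZ, PZ.
      rewrite h1, h2, h3. ring.
  - intros R0 _ HN0.
    apply (group Z gg PZ R0 1).
    + intros w0 Hw0. set (F := filter _ R0).
      assert (HF : forall w, In w F -> In w R0 /\ Z w = Z w0).
      { intros w Hw. apply filter_In in Hw as [h Hw]. apply cls_true in Hw. auto. }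
      rewrite (lsum_ext_in _ (fun w => (/ PZ w0) * (PXZ w * PYZ w))).
      2:{ intros w Hw. unfold gg, PZ. rewrite (proj2 (HF w Hw)). unfold Rdiv. ring. }
      rewrite lsum_scal.
      assert (Hm : lsum (fun w => PXZ w * PYZ w) F <= PZ w0 * PZ w0).
      { apply (group X (fun w => PXZ w * PYZ w) (fun w => PXZ w * PZ w0) F).
        - intros w1 Hw1. set (G := filter _ F).
          assert (HG : forall w, In w G -> In w F /\ X w = X w1).
          { intros w Hw. apply filter_In in Hw as [h Hw]. apply cls_true in Hw. auto. }
          rewrite (lsum_ext_in _ (fun w => PXZ w1 * PYZ w)).
          2:{ intros w Hw. destruct (HG w Hw) as [h1 h2]. destruct (HF w h1) as [_ h3].
              destruct (HF w1 Hw1) as [_ h4].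
              unfold PXZ. rewrite h2, h3, h4. auto. }
          rewrite lsum_scal. apply Rmult_le_compat_l. apply Pr_nonneg; auto.
          eapply Rle_trans. 2: apply (disj_sum p Y hp G (fun w' => Z w' = Z w0)).
          * right. apply lsum_ext_in. intros w Hw. unfold PYZ. apply Pr_ext.
            intros y. destruct (HF w (proj1 (HG w Hw))) as [_ h]. rewrite h. tauto.
          * apply (nodup_map_coarser (fun w => (X w, Y w, Z w))).
            -- unfold G, F. apply nodup_map_filter, nodup_map_filter; auto.
            -- intros x y Hx Hy Hxy. destruct (HG x Hx) as [hx1 hx2]. destruct (HG y Hy) as [hy1 hy2].
               destruct (HF x hx1) as [_ hx3]. destruct (HF y hy1) as [_ hy3]. congruence.
        - intros R1 HR1 HN1. rewrite (lsum_ext_in _ (fun w => PZ w0 * PXZ w)).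
          2:{ intros; ring. }
          rewrite lsum_scal. apply Rmult_le_compat_l. apply Pr_nonneg; auto.
          eapply Rle_trans. 2: apply (disj_sum p X hp R1 (fun w' => Z w' = Z w0)); auto.
          right. apply lsum_ext_in. intros w Hw. unfold PXZ. apply Pr_ext.
          intros y. destruct (HF w (HR1 w Hw)) as [_ h]. rewrite h. tauto. }
      assert (hz := Pr_nonneg p (fun w' => Z w' = Z w0) hp). fold (PZ w0) in hz.
      destruct hz as [hz|hz].
      * apply (Rmult_le_reg_l (PZ w0)); auto. rewrite <- Rmult_assoc, Rinv_r by lra. lra.
      * rewrite <- hz, Rinv_0. lra.
    + intros R1 HR1 HN1. eapply Rle_trans. 2: apply (Pr_le1 p (fun _ => True) hp).
      eapply Rle_trans. 2: apply (disj_sum p Z hp R1 (fun _ => True)); auto.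
      right. apply lsum_ext_in. intros w Hw. unfold PZ. apply Pr_ext. tauto.
Qed.

End Key.

Lemma ln_le_xm1 x : 0 < x -> ln x <= x - 1.
Proof. intros h. assert (H := exp_ineq1_le (ln x)). rewrite exp_ln in H; lra. Qed.

Lemma ln_nonpos x : x <= 1 -> ln x <= 0.
Proof. intros h. destruct (Rlt_dec 0 x) as [h0|h0].
  - destruct (Req_dec x 1) as [->|ne]. rewrite ln_1; lra.
    left. rewrite <- ln_1. apply ln_increasing; lra.
  - unfold ln. destruct (Rlt_dec 0 x); [contradiction|lra]. Qed.

Lemma ln_mono x y : 0 < x -> x <= y -> ln x <= ln y.
Proof. intros h1 [h2| <-]; [left; apply ln_increasing; auto| lra]. Qed.

Section Ent.
Variable p : nat -> R.
Hypothesis hp : is_pmf p.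

Lemma p_nonneg w : 0 <= p w.
Proof. apply hp. Qed.

Lemma ent_term_nonneg {A} (K : nat -> A) w : 0 <= ent_term p K w.
Proof. unfold ent_term. apply Rmult_le_pos. apply p_nonneg.
  assert (H := ln_nonpos _ (Pr_le1 p (fun w' => K w' = K w) hp)). lra. Qed.

Lemma Ent_sum {A} (K : nat -> A) : finite_entropy p K -> infinite_sum (ent_term p K) (Ent p K).
Proof. intros [l Hl]. unfold Ent. rewrite (sum_of_eq _ _ Hl). auto. Qed.

Lemma ent_inv {A B} (K1 : nat -> A) (K2 : nat -> B) :
  (forall w w', K1 w' = K1 w <-> K2 w' = K2 w) -> ent_term p K1 = ent_term p K2.
Proof. intros H. apply functional_extensionality. intros w. unfold ent_term.
  rewrite (Pr_ext p _ (fun w' => K2 w' = K2 w)); auto. Qed.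

Lemma Ent_inv {A B} (K1 : nat -> A) (K2 : nat -> B) :
  (forall w w', K1 w' = K1 w <-> K2 w' = K2 w) -> Ent p K1 = Ent p K2.
Proof. intros H. unfold Ent. rewrite (ent_inv K1 K2 H). auto. Qed.

Lemma fin_inv {A B} (K1 : nat -> A) (K2 : nat -> B) :
  (forall w w', K1 w' = K1 w <-> K2 w' = K2 w) -> finite_entropy p K1 -> finite_entropy p K2.
Proof. intros H. unfold finite_entropy. rewrite (ent_inv K1 K2 H). auto. Qed.

Lemma ent_mono_pt {A B} (K1 : nat -> A) (K2 : nat -> B) :
  (forall w w', K1 w' = K1 w -> K2 w' = K2 w) -> forall w, ent_term p K2 w <= ent_term p K1 w.
Proof. intros H w. unfold ent_term. destruct (p_nonneg w) as [hw|hw].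
  - apply Rmult_le_compat_l; [lra|]. apply Ropp_le_contravar. apply ln_mono.
    apply Rlt_le_trans with (p w); [lra| apply Pr_ge_p; auto].
    apply Pr_mono; auto.
  - rewrite <- hw; lra. Qed.

Lemma fin_mono {A B} (K1 : nat -> A) (K2 : nat -> B) :
  (forall w w', K1 w' = K1 w -> K2 w' = K2 w) -> finite_entropy p K1 ->
  finite_entropy p K2 /\ Ent p K2 <= Ent p K1.
Proof. intros H H1. assert (Hf : finite_entropy p K2).
  { destruct H1 as [l Hl]. destruct (Rseries_CV_comp (ent_term p K2) (ent_term p K1)) as [l2 Hl2].
    intros n; split; [apply ent_term_nonneg| apply ent_mono_pt; auto].
    exists l; auto. exists l2; auto. }
  split; auto. eapply lim_le. 2,3: apply Ent_sum; auto. apply ent_mono_pt; auto. Qed.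

Lemma Pr_one : Pr p (fun _ => True) = 1.
Proof. eapply uniqueness_sum. apply Pr_sum; auto. eapply isum_ext. 2: apply (proj2 hp).
  intros k; unfold ind; destruct excluded_middle_informative; tauto. Qed.

Lemma bounded_fin (f : nat -> R) M : (forall k, 0 <= f k) -> (forall N, sum_f_R0 f N <= M) ->
  exists l, infinite_sum f l.
Proof. intros H1 H2. destruct (growing_cv (fun N => sum_f_R0 f N)) as [l Hl].
  - intros n. simpl. specialize (H1 (S n)); lra.
  - exists M. intros x [N ->]. auto.
  - exists l; auto. Qed.

Lemma sum4 f g h q N : sum_f_R0 (fun k => f k + g k + h k - q k) N =
  sum_f_R0 f N + sum_f_R0 g N + sum_f_R0 h N - sum_f_R0 q N.
Proof. induction N; simpl; [ring|rewrite IHN; ring]. Qed.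

Section Gibbs.
Variables (A B C : Type) (X : nat -> A) (Y : nat -> B) (Z : nat -> C).
Let KXZ := fun w => (X w, Z w).
Let KYZ := fun w => (Y w, Z w).
Let KXYZ := fun w => (X w, Y w, Z w).

Lemma gibbs_pt w : ent_term p KXYZ w + ent_term p Z w <=
  ent_term p KXZ w + ent_term p KYZ w + tterm p A B C X Y Z w - p w.
Proof.
  unfold ent_term, tterm, gg.
  rewrite (Pr_ext p (fun w' => KXYZ w' = KXYZ w) (fun w' => X w' = X w /\ Y w' = Y w /\ Z w' = Z w)).
  2:{ intros y; unfold KXYZ; split; [intros h; inversion h; auto| intros [h1 [h2 h3]]; rewrite h1,h2,h3; auto]. }
  rewrite (Pr_ext p (fun w' => KXZ w' = KXZ w) (fun w' => X w' = X w /\ Z w' = Z w)).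
  2:{ intros y; unfold KXZ; split; [intros h; inversion h; auto| intros [h1 h3]; rewrite h1,h3; auto]. }
  rewrite (Pr_ext p (fun w' => KYZ w' = KYZ w) (fun w' => Y w' = Y w /\ Z w' = Z w)).
  2:{ intros y; unfold KYZ; split; [intros h; inversion h; auto| intros [h1 h3]; rewrite h1,h3; auto]. }
  fold (PXYZ p A B C X Y Z w) (PXZ p A C X Z w) (PYZ p B C Y Z w) (PZ p C Z w).
  set (a := PXYZ p A B C X Y Z w). set (b := PXZ p A C X Z w). set (c := PYZ p B C Y Z w).
  set (d := PZ p C Z w).
  destruct (p_nonneg w) as [hw|hw]; [|rewrite <- hw; lra].
  assert (ha : p w <= a) by (apply Pr_ge_p; auto).
  assert (hb : p w <= b) by (apply Pr_ge_p; auto).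
  assert (hc : p w <= c) by (apply Pr_ge_p; auto).
  assert (hd : p w <= d) by (apply Pr_ge_p; auto).
  assert (hx := ln_le_xm1 (b * c / d / a)).
  assert (Hpos : 0 < b * c / d / a) by (unfold Rdiv; repeat apply Rmult_lt_0_compat; try apply Rinv_0_lt_compat; lra).
  specialize (hx Hpos).
  unfold Rdiv in hx. rewrite !ln_mult, !ln_Rinv in hx; try lra;
    try (apply Rinv_0_lt_compat; lra); try (apply Rmult_lt_0_compat; lra);
    try (repeat apply Rmult_lt_0_compat; try apply Rinv_0_lt_compat; lra).
  unfold Rdiv.
  assert (p w * (ln b + ln c + - ln d + - ln a) <= p w * (b * c * / d * / a - 1)).
  { apply Rmult_le_compat_l; lra. }
  nra.
Qed.

Lemma gibbs : finite_entropy p KXZ -> finite_entropy p KYZ ->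
  finite_entropy p KXYZ /\ Ent p KXYZ + Ent p Z <= Ent p KXZ + Ent p KYZ.
Proof.
  intros H1 H2.
  assert (HZ : finite_entropy p Z).
  { apply (fin_mono KXZ Z); auto. intros w w' h; unfold KXZ in h; inversion h; auto. }
  assert (Hpart : forall N, sum_f_R0 (ent_term p KXYZ) N + sum_f_R0 (ent_term p Z) N <=
     Ent p KXZ + Ent p KYZ + 1 - sum_f_R0 p N).
  { intros N. rewrite <- sum_plus.
    eapply Rle_trans. apply sum_le. intros k; apply gibbs_pt.
    rewrite sum4.
    assert (h1 := partial_le_lim _ _ N (ent_term_nonneg KXZ) (Ent_sum _ H1)).
    assert (h2 := partial_le_lim _ _ N (ent_term_nonneg KYZ) (Ent_sum _ H2)).
    assert (h3 := key_bound p hp A B C X Y Z N). lra. }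
  assert (HF : finite_entropy p KXYZ).
  { apply (bounded_fin _ (Ent p KXZ + Ent p KYZ + 1)). apply ent_term_nonneg.
    intros N. specialize (Hpart N). assert (0 <= sum_f_R0 (ent_term p Z) N).
    apply sum_nonneg; apply ent_term_nonneg. assert (0 <= sum_f_R0 p N) by (apply sum_nonneg; apply p_nonneg). lra. }
  split; auto.
  assert (Hc : Un_cv (fun _ : nat => Ent p KXZ + Ent p KYZ + 1) (Ent p KXZ + Ent p KYZ + 1)).
  { intros e' He'; exists 0%nat; intros; unfold R_dist; rewrite Rminus_diag, Rabs_R0; auto. }
  assert (HH := @Rle_cv_lim (fun N => sum_f_R0 (ent_term p KXYZ) N + sum_f_R0 (ent_term p Z) N)
     (fun N => Ent p KXZ + Ent p KYZ + 1 - sum_f_R0 p N) _ _ Hpart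
     (CV_plus _ _ _ _ (Ent_sum _ HF) (Ent_sum _ HZ)) (CV_minus _ _ _ _ Hc (proj2 hp))).
  lra.
Qed.
End Gibbs.
End Ent.

Lemma rsum_le n f g : (forall k, (1 <= k <= n)%nat -> f k <= g k) -> rsum n f <= rsum n g.
Proof. induction n; simpl; intros H; [lra|]. assert (H1 := H (S n) ltac:(lia)).
  assert (rsum n f <= rsum n g) by (apply IHn; intros; apply H; lia). lra. Qed.

Lemma rsum_ext n f g : (forall k, (1 <= k <= n)%nat -> f k = g k) -> rsum n f = rsum n g.
Proof. intros H; apply Rle_antisym; apply rsum_le; intros k hk; rewrite H; auto; lra. Qed.

Lemma rsum_plus n f g : rsum n (fun k => f k + g k) = rsum n f + rsum n g.
Proof. induction n; simpl; [ring|rewrite IHn; ring]. Qed.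

Lemma rsum_minus n f g : rsum n (fun k => f k - g k) = rsum n f - rsum n g.
Proof. induction n; simpl; [ring|rewrite IHn; ring]. Qed.

Lemma rsum_scal n c f : rsum n (fun k => c * f k) = c * rsum n f.
Proof. induction n; simpl; [ring|rewrite IHn; ring]. Qed.

Lemma rsum_const n c : rsum n (fun _ => c) = INR n * c.
Proof. induction n; simpl rsum; [simpl; ring|rewrite IHn, S_INR; ring]. Qed.

Lemma rsum_tele n g : rsum n (fun k => g (k - 1)%nat - g k) = g 0%nat - g n.
Proof. induction n; simpl rsum. ring. rewrite IHn. replace (n-0)%nat with n by lia. ring. Qed.

Lemma rsum_skip n a f : rsum n (fun b => if Nat.eq_dec a b then 0 else f b) =
  rsum n f - (if Compare_dec.le_dec 1 a then if Compare_dec.le_dec a n then f a else 0 else 0).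
Proof. induction n; simpl rsum.
  - repeat destruct Compare_dec.le_dec; try lia; ring.
  - rewrite IHn. destruct (Nat.eq_dec a (S n)) as [e|ne].
    + subst. repeat destruct Compare_dec.le_dec; try lia; ring.
    + repeat destruct Compare_dec.le_dec; try lia; ring.
Qed.

Section Alg.
Variable D : nat.
Variables E0 E1 : (nat -> Prop) -> R.
Let hS := E1 (fun _ => False).
Hypothesis ext0 : forall P Q, (forall d, (1 <= d <= D)%nat -> (P d <-> Q d)) -> E0 P = E0 Q.
Hypothesis ext1 : forall P Q, (forall d, (1 <= d <= D)%nat -> (P d <-> Q d)) -> E1 P = E1 Q.
Hypothesis SM0 : forall P1 P2 P3, E0 (fun d => P1 d \/ P2 d \/ P3 d) + E0 P3 <=
   E0 (fun d => P1 d \/ P3 d) + E0 (fun d => P2 d \/ P3 d).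
Hypothesis SM1 : forall P1 P2 P3, E1 (fun d => P1 d \/ P2 d \/ P3 d) + E1 P3 <=
   E1 (fun d => P1 d \/ P3 d) + E1 (fun d => P2 d \/ P3 d).
Hypothesis F2 : forall P, E0 P <= E1 P.
Hypothesis F3 : forall P, E1 P <= E0 P + hS.
Hypothesis F4 : E0 (fun _ => True) = rsum D (fun d => E0 (fun e => e = d)).
Hypothesis F5 : E0 (fun _ => False) = 0.

Lemma claim2 : rsum D (fun k => E0 (fun e => e = k) + hS - E1 (fun e => e = k)) <= hS.
Proof.
  assert (H : forall k, (1 <= k <= D)%nat -> hS - E1 (fun e => e = k) <=
     E1 (fun e => (e <= k - 1)%nat) - E1 (fun e => (e <= k)%nat)).
  { intros k hk. assert (h := SM1 (fun e => e = k) (fun e => (e <= k - 1)%nat) (fun _ => False)). cbv beta in h.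
    rewrite (ext1 (fun d => d = k \/ (d <= k - 1)%nat \/ False) (fun e => (e <= k)%nat)) in h
      by (intros; lia).
    rewrite (ext1 (fun d => d = k \/ False) (fun e => e = k)) in h by (intros; tauto).
    rewrite (ext1 (fun d => (d <= k - 1)%nat \/ False) (fun e => (e <= k - 1)%nat)) in h by (intros; tauto).
    fold hS in h. lra. }
  assert (H2 := rsum_le D _ _ H).
  rewrite (rsum_tele D (fun k => E1 (fun e => (e <= k)%nat))) in H2.
  rewrite rsum_minus, rsum_const in H2.
  rewrite (ext1 (fun e => (e <= 0)%nat) (fun _ => False)) in H2 by (intros; lia).
  rewrite (ext1 (fun e => (e <= D)%nat) (fun _ => True)) in H2 by (intros; lia).
  rewrite (rsum_ext D _ (fun k => E0 (fun e => e = k) + (hS - E1 (fun e => e = k)))) by (intros; ring).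
  rewrite rsum_plus, rsum_minus, rsum_const, <- F4.
  assert (h := F2 (fun _ => True)). fold hS in H2. lra.
Qed.

Lemma claim1 a : (1 <= a <= D)%nat ->
  rsum D (fun b => if Nat.eq_dec a b then 0 else
     E0 (fun e => e = a \/ e = b) + E1 (fun e => e = a) - E1 (fun e => e = a \/ e = b) - E0 (fun e => e = a))
  <= hS.
Proof.
  intros ha.
  set (T := fun b => if Nat.eq_dec a b then 0 else E1 (fun e => e = a) - E1 (fun e => e = a \/ e = b)).
  assert (HT : forall b, (1 <= b <= D)%nat -> T b <=
     E1 (fun e => e = a \/ (e <= b - 1)%nat) - E1 (fun e => e = a \/ (e <= b)%nat)).
  { intros b hb. unfold T. destruct (Nat.eq_dec a b) as [e|ne].
    - subst. rewrite (ext1 (fun e => e = b \/ (e <= b - 1)%nat) (fun e => e = b \/ (e <= b)%nat))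
       by (intros; lia). lra.
    - assert (h := SM1 (fun e => e = b) (fun e => (e <= b - 1)%nat) (fun e => e = a)). cbv beta in h.
      rewrite (ext1 (fun d => d = b \/ (d <= b - 1)%nat \/ d = a) (fun e => e = a \/ (e <= b)%nat)) in h
        by (intros; lia).
      rewrite (ext1 (fun d => d = b \/ d = a) (fun e => e = a \/ e = b)) in h by (intros; lia).
      rewrite (ext1 (fun d => (d <= b - 1)%nat \/ d = a) (fun e => e = a \/ (e <= b - 1)%nat)) in h
        by (intros; lia).
      lra. }
  assert (H2 := rsum_le D _ _ HT).
  rewrite (rsum_tele D (fun k => E1 (fun e => e = a \/ (e <= k)%nat))) in H2.
  rewrite (ext1 (fun e => e = a \/ (e <= 0)%nat) (fun e => e = a)) in H2 by (intros; lia).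
  rewrite (ext1 (fun e => e = a \/ (e <= D)%nat) (fun _ => True)) in H2 by (intros; lia).
  assert (HU : rsum D (fun b => if Nat.eq_dec a b then 0 else
     E0 (fun e => e = a \/ e = b) + E1 (fun e => e = a) - E1 (fun e => e = a \/ e = b) - E0 (fun e => e = a))
     <= rsum D (fun b => (if Nat.eq_dec a b then 0 else E0 (fun e => e = b)) + T b)).
  { apply rsum_le. intros b hb. unfold T. destruct (Nat.eq_dec a b) as [e|ne]; [lra|].
    assert (h := SM0 (fun e => e = a) (fun e => e = b) (fun _ => False)). cbv beta in h.
    rewrite F5 in h.
    rewrite (ext0 (fun d => d = a \/ d = b \/ False) (fun e => e = a \/ e = b)) in h by (intros; tauto).
    rewrite (ext0 (fun d => d = a \/ False) (fun e => e = a)) in h by (intros; tauto).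
    rewrite (ext0 (fun d => d = b \/ False) (fun e => e = b)) in h by (intros; tauto).
    lra. }
  rewrite rsum_plus, (rsum_skip D a (fun b => E0 (fun e => e = b))), <- F4 in HU.
  destruct Compare_dec.le_dec; [|lia]. destruct Compare_dec.le_dec; [|lia].
  assert (h1 := F3 (fun e => e = a)). assert (h2 := F2 (fun _ => True)). lra.
Qed.

Lemma alg_main : (1 <= D)%nat ->
  rsum D (fun a => rsum D (fun b => if Nat.eq_dec a b then 0 else
     E0 (fun e => e = a \/ e = b) + hS - E1 (fun e => e = a \/ e = b)))
  <= (2 * INR D - 1) * hS.
Proof.
  intros hD.
  set (c := fun a => E0 (fun e => e = a) + hS - E1 (fun e => e = a)).
  set (inner := fun a => rsum D (fun b => if Nat.eq_dec a b then 0 else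
     E0 (fun e => e = a \/ e = b) + E1 (fun e => e = a) - E1 (fun e => e = a \/ e = b) - E0 (fun e => e = a))).
  rewrite (rsum_ext D _ (fun a => (INR D - 1) * c a + inner a)).
  - rewrite rsum_plus, rsum_scal.
    assert (h1 := claim2). fold c in h1.
    assert (h2 : rsum D inner <= rsum D (fun _ => hS)) by (apply rsum_le; intros; apply claim1; auto).
    rewrite rsum_const in h2.
    assert (hD' : 1 <= INR D) by (apply (le_INR 1); auto).
    assert ((INR D - 1) * rsum D c <= (INR D - 1) * hS) by (apply Rmult_le_compat_l; lra).
    lra.
  - intros a ha. unfold inner. rewrite (rsum_ext D _ (fun b => (if Nat.eq_dec a b then 0 else c a) +
       (if Nat.eq_dec a b then 0 else
     E0 (fun e => e = a \/ e = b) + E1 (fun e => e = a) - E1 (fun e => e = a \/ e = b) - E0 (fun e => e = a)))).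
    + rewrite rsum_plus. rewrite (rsum_skip D a (fun _ => c a)), rsum_const.
      destruct Compare_dec.le_dec; [|lia]. destruct Compare_dec.le_dec; [|lia]. ring.
    + intros b hb. destruct (Nat.eq_dec a b); [ring|]. unfold c. ring.
Qed.
End Alg.

Lemma isum_zero : infinite_sum (fun _ => 0) 0.
Proof. intros e He. exists 0%nat. intros n _. rewrite sum_cte. unfold R_dist. rewrite Rmult_0_l, Rminus_diag, Rabs_R0. auto. Qed.

Lemma Ent_const p (hp : is_pmf p) {T} (t : T) : Ent p (fun _ => t) = 0.
Proof. unfold Ent. replace (ent_term p (fun _ => t)) with (fun _ : nat => 0).
  apply sum_of_eq, isum_zero. apply functional_extensionality; intros w. unfold ent_term.
  rewrite (Pr_ext p _ (fun _ => True)) by tauto. rewrite Pr_one, ln_1 by auto. ring. Qed.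

Lemma subadd p (hp : is_pmf p) {A B} (X : nat -> A) (Y : nat -> B) :
  finite_entropy p X -> finite_entropy p Y ->
  finite_entropy p (fun w => (X w, Y w)) /\ Ent p (fun w => (X w, Y w)) <= Ent p X + Ent p Y.
Proof. intros h1 h2.
  assert (e1 : forall w w', (X w', tt) = (X w, tt) <-> X w' = X w) by (intros; split; [intros h; inversion h|intros ->]; auto).
  assert (e2 : forall w w', (Y w', tt) = (Y w, tt) <-> Y w' = Y w) by (intros; split; [intros h; inversion h|intros ->]; auto).
  assert (e3 : forall w w', (X w', Y w', tt) = (X w, Y w, tt) <-> (X w', Y w') = (X w, Y w))
    by (intros; split; [intros h; inversion h|intros h; inversion h]; auto).
  destruct (gibbs p hp A B unit X Y (fun _ => tt)) as [g1 g2].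
  - apply (fin_inv p X); auto. intros; rewrite e1; tauto.
  - apply (fin_inv p Y); auto. intros; rewrite e2; tauto.
  - rewrite (Ent_inv p _ (fun w => (X w, Y w)) e3), (Ent_inv p _ X e1), (Ent_inv p _ Y e2), Ent_const in g2; auto.
    split; [|lra]. apply (fin_inv p _ _ e3); auto.
Qed.

Lemma ln_rprod n f : (forall d, (1 <= d <= n)%nat -> 0 < f d) ->
  0 < rprod n f /\ ln (rprod n f) = rsum n (fun d => ln (f d)).
Proof. induction n; simpl; intros H.
  - split; [lra| apply ln_1].
  - destruct IHn as [h1 h2]. intros; apply H; lia. assert (h3 := H (S n) ltac:(lia)).
    split. apply Rmult_lt_0_compat; auto. rewrite ln_mult, h2; auto. Qed.

Lemma isum_rsum n (g : nat -> nat -> R) l : (forall d, (1 <= d <= n)%nat -> infinite_sum (g d) (l d)) ->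
  infinite_sum (fun k => rsum n (fun d => g d k)) (rsum n l).
Proof. induction n; simpl; intros H. apply isum_zero. apply isum_plus. apply IHn; intros; apply H; lia.
  apply H; lia. Qed.

Section Main.
Variables (D : nat) (p : nat -> R) (W : nat -> nat -> nat) (S : nat -> nat).
Hypothesis hp : is_pmf p.
Hypothesis hind : mutually_independent p D W.
Hypothesis hW : forall d, (1 <= d <= D)%nat -> finite_entropy p (W d).
Hypothesis hS : finite_entropy p S.

Definition KP (P : nat -> Prop) (w : nat) : nat -> nat :=
  fun d => if excluded_middle_informative (P d /\ (1 <= d <= D)%nat) then W d w else 0%nat.

Lemma KP_eq P w w' : KP P w' = KP P w <-> (forall d, P d -> (1 <= d <= D)%nat -> W d w' = W d w).
Proof. split.
  - intros h d h1 h2. assert (h3 := f_equal (fun f => f d) h). unfold KP in h3. simpl in h3.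
    destruct excluded_middle_informative; tauto.
  - intros h. apply functional_extensionality; intros d. unfold KP. destruct excluded_middle_informative as [[a b]|]; auto. Qed.

Lemma KP_ext P Q : (forall d, (1 <= d <= D)%nat -> (P d <-> Q d)) -> KP P = KP Q.
Proof. intros h. apply functional_extensionality; intros w; apply functional_extensionality; intros d.
  unfold KP. do 2 destruct excluded_middle_informative; auto; exfalso; firstorder. Qed.

Definition E0 P := Ent p (KP P).
Definition E1 P := Ent p (fun w => (KP P w, S w)).

Lemma all_pt w : ent_term p (KP (fun _ => True)) w = rsum D (fun d => ent_term p (W d) w).
Proof.
  unfold ent_term.
  rewrite (Pr_ext p _ (fun w' => forall d, (1 <= d <= D)%nat -> W d w' = W d w)).
  2:{ intros y; rewrite KP_eq; firstorder. }
  rewrite (hind (fun d => W d w)).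
  destruct (p_nonneg p hp w) as [hw|hw].
  - destruct (ln_rprod D (fun d => Pr p (fun w' => W d w' = W d w))) as [_ ->].
    { intros d hd. apply Rlt_le_trans with (p w); auto. apply Pr_ge_p; auto. }
    rewrite (rsum_ext D (fun d => p w * - ln (Pr p (fun w' => W d w' = W d w))) (fun d => (- p w) * ln (Pr p (fun w' => W d w' = W d w)))) by (intros; ring).
    rewrite rsum_scal. ring.
  - rewrite <- hw. rewrite (rsum_ext D _ (fun _ => 0)) by (intros; ring). rewrite rsum_const. ring.
Qed.

Lemma fin_all : finite_entropy p (KP (fun _ => True)) /\
  Ent p (KP (fun _ => True)) = rsum D (fun d => Ent p (W d)).
Proof.
  assert (H : infinite_sum (ent_term p (KP (fun _ => True))) (rsum D (fun d => Ent p (W d)))).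
  { eapply isum_ext. intros k; symmetry; apply all_pt.
    apply (isum_rsum D (fun d => ent_term p (W d))). intros; apply Ent_sum; auto. }
  split. exists (rsum D (fun d => Ent p (W d))); auto.
  unfold Ent at 1. apply sum_of_eq; auto.
Qed.

Definition V w := (KP (fun _ => True) w, S w).

Lemma fin_V : finite_entropy p V.
Proof. apply (subadd p hp); auto. apply fin_all. Qed.

Lemma V_fine P w w' : V w' = V w -> KP P w' = KP P w /\ S w' = S w.
Proof. unfold V; intros h; inversion h as [[h1 h2]]. rewrite KP_eq in h1. split; auto.
  apply KP_eq. intros; apply h1; auto. Qed.

Lemma fin0 P : finite_entropy p (KP P).
Proof. apply (fin_mono p hp V); [|apply fin_V]. intros w w' h. apply (V_fine P w w' h). Qed.

Lemma fin1 P : finite_entropy p (fun w => (KP P w, S w)).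
Proof. apply (fin_mono p hp V); [|apply fin_V]. intros w w' h. destruct (V_fine P w w' h) as [h1 h2].
  rewrite h1, h2; auto. Qed.

Lemma pair_iff {A B} (a a' : A) (b b' : B) : (a', b') = (a, b) <-> a' = a /\ b' = b.
Proof. split; [intros h; inversion h; auto| intros [-> ->]; auto]. Qed.

Lemma SM0' P1 P2 P3 : E0 (fun d => P1 d \/ P2 d \/ P3 d) + E0 P3 <=
   E0 (fun d => P1 d \/ P3 d) + E0 (fun d => P2 d \/ P3 d).
Proof.
  destruct (gibbs p hp _ _ _ (KP P1) (KP P2) (KP P3)) as [_ g].
  - apply (fin_inv p (KP (fun d => P1 d \/ P3 d))); [|apply fin0]. intros w w'.
    rewrite pair_iff, !KP_eq. firstorder.
  - apply (fin_inv p (KP (fun d => P2 d \/ P3 d))); [|apply fin0]. intros w w'.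
    rewrite pair_iff, !KP_eq. firstorder.
  - unfold E0.
    rewrite (Ent_inv p (fun w => (KP P1 w, KP P3 w)) (KP (fun d => P1 d \/ P3 d))) in g by (intros w w'; rewrite pair_iff, !KP_eq; firstorder).
    rewrite (Ent_inv p (fun w => (KP P2 w, KP P3 w)) (KP (fun d => P2 d \/ P3 d))) in g
      by (intros w w'; rewrite pair_iff, !KP_eq; firstorder).
    rewrite (Ent_inv p (fun w => (KP P1 w, KP P2 w, KP P3 w)) (KP (fun d => P1 d \/ P2 d \/ P3 d))) in g
      by (intros w w'; rewrite !pair_iff, !KP_eq; firstorder).
    exact g.
Qed.

Lemma SM1' P1 P2 P3 : E1 (fun d => P1 d \/ P2 d \/ P3 d) + E1 P3 <=
   E1 (fun d => P1 d \/ P3 d) + E1 (fun d => P2 d \/ P3 d).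
Proof.
  destruct (gibbs p hp _ _ _ (KP P1) (KP P2) (fun w => (KP P3 w, S w))) as [_ g].
  - apply (fin_inv p (fun w => (KP (fun d => P1 d \/ P3 d) w, S w))); [|apply fin1]. intros w w'.
    rewrite !pair_iff, !KP_eq. firstorder.
  - apply (fin_inv p (fun w => (KP (fun d => P2 d \/ P3 d) w, S w))); [|apply fin1]. intros w w'.
    rewrite !pair_iff, !KP_eq. firstorder.
  - unfold E1.
    rewrite (Ent_inv p (fun w => (KP P1 w, (KP P3 w, S w))) (fun w => (KP (fun d => P1 d \/ P3 d) w, S w))) in g
      by (intros w w'; rewrite !pair_iff, !KP_eq; firstorder).
    rewrite (Ent_inv p (fun w => (KP P2 w, (KP P3 w, S w))) (fun w => (KP (fun d => P2 d \/ P3 d) w, S w))) in g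
      by (intros w w'; rewrite !pair_iff, !KP_eq; firstorder).
    rewrite (Ent_inv p (fun w => (KP P1 w, KP P2 w, (KP P3 w, S w))) (fun w => (KP (fun d => P1 d \/ P2 d \/ P3 d) w, S w))) in g
      by (intros w w'; rewrite !pair_iff, !KP_eq; firstorder).
    exact g.
Qed.

Lemma ES : Ent p S = E1 (fun _ => False).
Proof. unfold E1. apply Ent_inv. intros w w'. rewrite pair_iff, KP_eq. firstorder. Qed.

Lemma F2' P : E0 P <= E1 P.
Proof. apply (fin_mono p hp (fun w => (KP P w, S w)) (KP P)); [|apply fin1].
  intros w w' h; inversion h; auto. Qed.

Lemma F3' P : E1 P <= E0 P + E1 (fun _ => False).
Proof. rewrite <- ES. apply (subadd p hp (KP P) S); auto. apply fin0. Qed.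

Lemma F4' : E0 (fun _ => True) = rsum D (fun d => E0 (fun e => e = d)).
Proof. unfold E0. rewrite (proj2 fin_all). apply rsum_ext. intros d hd. apply Ent_inv.
  intros w w'. rewrite KP_eq. split; [intros h e -> _; auto| intros h; apply h; auto]. Qed.

Lemma F5' : E0 (fun _ => False) = 0.
Proof. unfold E0. rewrite (Ent_inv p _ (fun _ => tt)). apply Ent_const; auto.
  intros w w'. rewrite KP_eq. firstorder. Qed.

Lemma mainE : (2 <= D)%nat ->
  rsum D (fun d1 => rsum D (fun d2 =>
      if Nat.eq_dec d1 d2 then 0
      else MI p (fun w => (W d1 w, W d2 w)) S))
  <= (2 * INR D - 1) * Ent p S.
Proof.
  intros hD. rewrite ES.
  eapply Rle_trans. 2: apply (alg_main D E0 E1); try lia.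
  - right. apply rsum_ext; intros a ha. apply rsum_ext; intros b hb.
    destruct Nat.eq_dec; auto. unfold MI. rewrite ES. unfold E0, E1.
    rewrite (Ent_inv p (fun w => (W a w, W b w)) (KP (fun e => e = a \/ e = b)))
      by (intros w w'; rewrite pair_iff, KP_eq; split; [intros [h1 h2] d [->| ->] _; auto| intros h; split; apply h; auto]).
    rewrite (Ent_inv p (fun w => (W a w, W b w, S w)) (fun w => (KP (fun e => e = a \/ e = b) w, S w)));
      [ring|].
    intros w w'; rewrite !pair_iff, KP_eq. split; [intros [[h1 h2] h3]; split; auto; intros d [->| ->] _; auto|].
    intros [h h3]; repeat split; auto; apply h; auto.
  - intros P Q h; unfold E0; rewrite (KP_ext P Q h); auto.
  - intros P Q h; unfold E1; rewrite (KP_ext P Q h); auto.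
  - apply SM0'.
  - apply SM1'.
  - apply F2'.
  - apply F3'.
  - apply F4'.
  - apply F5'.
Qed.
End Main.

Theorem mainTheorem5 (D : nat) (p : nat -> R) (W : nat -> nat -> nat) (S : nat -> nat)
  (hD : (2 <= D)%nat) (hp : is_pmf p)
  (hind : mutually_independent p D W)
  (hW : forall d, (1 <= d <= D)%nat -> finite_entropy p (W d))
  (hS : finite_entropy p S) :
  rsum D (fun d1 => rsum D (fun d2 =>
      if Nat.eq_dec d1 d2 then 0
      else MI p (fun w => (W d1 w, W d2 w)) S))
  <= (2 * INR D - 1) * Ent p S.
Proof.
  eapply mainE; eauto.
Qed.
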